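(* Let $\mathbb{R}^n$ be endowed with the $\ell_1$ norm and $\mathbb{R}^m$ with the Euclidean norm $\|\cdot\|_2$. Let $f(u)=\frac12\langle Qu,u\rangle+\langle b,u\rangle$ with $b\in\mathbb{R}^m$ and $Q\in\mathbb{R}^{m\times m}$ symmetric positive definite. Then for every $A\in\mathbb{R}^{m\times n}$ with at least two different columns, \[ L_{f,A}=\frac{\mathrm{diam}(Q^{1/2}A)^2}{4},\qquad \mu_{f,A}=\frac{\Phi(Q^{1/2}A)^2}{4}, \] and in particular $\dfrac{L_{f,A}}{\mu_{f,A}}=\dfrac{\mathrm{diam}(Q^{1/2}A)^2}{\Phi(Q^{1/2}A)^2}$.
   Context: $\Delta_{n-1}=\{x\in\mathbb{R}^n_+ : \sum_i x_i=1\}$. A matrix $A\in\mathbb{R}^{m\times n}$ is also identified with the set of its columns; $\mathrm{conv}(A)=\{Ax:x\in\Delta_{n-1}\}$. For $u\in\mathrm{conv}(A)$, $Z(u)=\{z\in\Delta_{n-1}:Az=u\}$ and $\mathrm{dist}(x,Z(u))=\min_{z\in Z(u)}\|x-z\|_1$. For a differentiable convex $f$ with $\mathrm{conv}(A)\subseteq\mathrm{dom}(f)$ and $A$ having at least two different columns, the relative smoothness and strong convexity constants are \[ L_{f,A}=\sup_{u\in\mathrm{conv}(A),\,x\in\Delta_{n-1}\setminus Z(u)}\frac{2(f(Ax)-f(u)-\langle\nabla f(u),Ax-u\rangle)}{\mathrm{dist}(x,Z(u))^2}, \] and $\mu_{f,A}$ is the same expression with $\inf$ in place of $\sup$. For a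 matrix $B$ (set of columns), $\mathrm{diam}(B)=\sup_{u,w\in B}\|u-w\|_2$, and the facial distance is $\Phi(B)=\min\{\mathrm{dist}(F,\mathrm{conv}(B\setminus F)): F\text{ a face of }\mathrm{conv}(B),\ \emptyset\ne F\ne\mathrm{conv}(B)\}$, where $B\setminus F$ denotes the columns of $B$ not in $F$ and $\mathrm{dist}(F,G)=\inf_{u\in F,w\in G}\|u-w\|_2$. *)

(* Defs.v *)
From HB Require Import structures.
From mathcomp Require Import all_boot all_order all_algebra.
From mathcomp Require Import all_classical all_reals all_analysis.
Set Implicit Arguments. Unset Strict Implicit. Unset Printing Implicit Defensive.
Import Order.TTheory GRing.Theory Num.Theory.
Import numFieldNormedType.Exports.
Local Open Scope classical_set_scope.
Local Open Scope ring_scope.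

Section Defs.
Variable R : realType.

Definition simplex (n : nat) : set 'cV[R]_n :=
  [set x | (forall i, 0 <= x i 0) /\ \sum_i x i 0 = 1].
Arguments simplex : clear implicits.

Definition convA (m n : nat) (A : 'M[R]_(m, n)) : set 'cV[R]_m :=
  [set A *m x | x in simplex n].

Definition Zset (m n : nat) (A : 'M[R]_(m, n)) (u : 'cV[R]_m) : set 'cV[R]_n :=
  [set z | simplex n z /\ A *m z = u].

Definition l1norm (n : nat) (x : 'cV[R]_n) : R := \sum_i `|x i 0|.

Definition distZ (m n : nat) (A : 'M[R]_(m, n)) (x : 'cV[R]_n) (u : 'cV[R]_m) : R :=
  inf [set l1norm (x - z) | z in Zset A u].

(* Bregman-type gap f(Ax) - f(u) - <grad f(u), Ax - u>, the inner-product term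
   being the directional derivative of f at u in direction Ax - u *)
Definition bregman (m n : nat) (f : 'cV[R]_m -> R) (A : 'M[R]_(m, n))
  (u : 'cV[R]_m) (x : 'cV[R]_n) : R :=
  f (A *m x) - f u - 'D_(A *m x - u) f u.

Definition ratio_set (m n : nat) (f : 'cV[R]_m -> R) (A : 'M[R]_(m, n)) : set (\bar R) :=
  [set r | exists (u : 'cV[R]_m) (x : 'cV[R]_n),
     [/\ convA A u, simplex n x, ~ Zset A u x &
         r = ((2 * bregman f A u x) / (distZ A x u) ^+ 2)%:E]].

Definition Lconst (m n : nat) (f : 'cV[R]_m -> R) (A : 'M[R]_(m, n)) : \bar R :=
  ereal_sup (ratio_set f A).
Definition muconst (m n : nat) (f : 'cV[R]_m -> R) (A : 'M[R]_(m, n)) : \bar R :=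
  ereal_inf (ratio_set f A).

Definition norm2 (m : nat) (v : 'cV[R]_m) : R := Num.sqrt (\sum_i (v i 0) ^+ 2).

Definition diam (m n : nat) (B : 'M[R]_(m, n)) : R :=
  sup [set norm2 (col i B - col j B) | i in [set: 'I_n] & j in [set: 'I_n]].

Definition setdist (m : nat) (F G : set 'cV[R]_m) : R :=
  inf [set norm2 (u - w) | u in F & w in G].

Definition convex_set (m : nat) (C : set 'cV[R]_m) : Prop :=
  forall x y t, C x -> C y -> 0 <= t <= 1 -> C ((1 - t) *: x + t *: y).

Definition is_face (m : nat) (C F : set 'cV[R]_m) : Prop :=
  [/\ F `<=` C, convex_set F &
      forall x y t, C x -> C y -> 0 < t < 1 -> F ((1 - t) *: x + t *: y) ->
        F x /\ F y].

Definition conv_cols_notin (m n : nat) (B : 'M[R]_(m, n)) (F : set 'cV[R]_m)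
  : set 'cV[R]_m :=
  [set B *m x | x in [set x | simplex n x /\ (forall j, F (col j B) -> x j 0 = 0)]].

Definition facial_dist (m n : nat) (B : 'M[R]_(m, n)) : R :=
  inf [set setdist F (conv_cols_notin B F) |
       F in [set F | [/\ is_face (convA B) F, F !=set0 & F <> convA B]]].

End Defs.

(* Main.v *)
From Pilot Require Import Defs.
From HB Require Import structures.
From mathcomp Require Import all_boot all_order all_algebra.
From mathcomp Require Import all_classical all_reals all_analysis.
Set Implicit Arguments. Unset Strict Implicit. Unset Printing Implicit Defensive.
Import Order.TTheory GRing.Theory Num.Theory.
Import numFieldNormedType.Exports.
Local Open Scope classical_set_scope.
Local Open Scope ring_scope.
From mathcomp Require Import ring lra.
Local Notation convA := Pilot.Defs.convA.
Local Notation convex_set := Pilot.Defs.convex_set.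

Ltac mlra := repeat match goal with H : @eq (matrix _ _ _) _ _ |- _ => clear H end; lra.

Lemma derive_quad (R : realType) m (f : 'cV[R]_m -> R) u d (D E : R) :
  (forall h, f (h *: d + u) - f u = h * D + h ^+ 2 * E) ->
  'D_d f u = D.
Proof.
move=> H; rewrite /derive.
apply: cvg_lim => //.
have HD : (fun h : R => D + h * E) @ 0^' --> D.
  suff : (fun h : R => D + h * E) @ 0^' --> D + 0 * E by rewrite mul0r addr0.
  apply: cvgD; first exact: cvg_cst.
  apply: cvgM; last exact: cvg_cst.
  by apply: cvg_trans (cvg_within _); exact: cvg_id.
apply: cvg_trans HD.
apply: near_eq_cvg; near=> h => /=.
rewrite H /GRing.scale /=.
have hn0 : h != 0 by near: h; exact: nbhs_dnbhs_neq.
by field.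
Unshelve. all: by end_near.
Qed.


Section Aux.
Variable R : realType.

Definition ev n (j : 'I_n) : 'cV[R]_n := \col_i (i == j)%:R.

Lemma sum_ev n (j : 'I_n) : \sum_i (ev j) i 0 = 1.
Proof.
rewrite (bigD1 j) //= big1 ?addr0; first by rewrite mxE eqxx.
by move=> i /negbTE ij; rewrite mxE ij.
Qed.

Lemma simplex_ev n (j : 'I_n) : @simplex R n (ev j).
Proof. by split; [move=> i; rewrite mxE ler0n | exact: sum_ev]. Qed.

Lemma mul_ev m n (B : 'M[R]_(m, n)) j : B *m ev j = col j B.
Proof.
apply/matrixP => k l; rewrite !mxE (bigD1 j) //= big1 ?addr0.
  by rewrite mxE eqxx mulr1.
by move=> i /negbTE ij; rewrite mxE ij mulr0.
Qed.

Lemma simplex_comb3 n (r0 r1 r2 : 'cV[R]_n) l0 l1 l2 :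
  @simplex R n r0 -> @simplex R n r1 -> @simplex R n r2 ->
  0 <= l0 -> 0 <= l1 -> 0 <= l2 -> l0 + l1 + l2 = 1 ->
  @simplex R n (l0 *: r0 + l1 *: r1 + l2 *: r2).
Proof.
move=> [p0 s0] [p1 s1] [p2 s2] h0 h1 h2 hs; split.
  move=> i; rewrite !mxE.
  by rewrite !addr_ge0 // mulr_ge0.
under eq_bigr do rewrite !mxE.
by rewrite !big_split /= -!mulr_sumr s0 s1 s2 !mulr1.
Qed.

Lemma convA_comb3 m n (B : 'M[R]_(m, n)) (a0 a1 a2 : 'cV[R]_m) (l0 l1 l2 : R) :
  convA B a0 -> convA B a1 -> convA B a2 ->
  0 <= l0 -> 0 <= l1 -> 0 <= l2 -> l0 + l1 + l2 = 1 ->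
  convA B (l0 *: a0 + l1 *: a1 + l2 *: a2).
Proof.
move=> [r0 s0 <-] [r1 s1 <-] [r2 s2 <-] h0 h1 h2 hs.
exists (l0 *: r0 + l1 *: r1 + l2 *: r2); first exact: simplex_comb3.
by rewrite !mulmxDr !scalemxAr.
Qed.

Lemma convA_comb2 m n (B : 'M[R]_(m, n)) (a b : 'cV[R]_m) (s : R) :
  convA B a -> convA B b -> 0 <= s <= 1 -> convA B ((1 - s) *: a + s *: b).
Proof.
move=> ha hb /andP[s0 s1].
have := @convA_comb3 m n B a b a (1 - s) s 0 ha hb ha.
rewrite scale0r addr0 addr0 subrK; apply => //.
by rewrite subr_ge0.
Qed.

Lemma convA_col m n (B : 'M[R]_(m, n)) j : convA B (col j B).
Proof. by exists (ev j); [exact: simplex_ev | exact: mul_ev]. Qed.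

Lemma cont_sum (T : topologicalType) (I : Type) (s : seq I) (F : I -> T -> R) :
  (forall i, continuous (F i)) -> continuous (fun t => \sum_(i <- s) F i t).
Proof.
move=> HF; elim: s => [|a s IH].
  under eq_fun do rewrite big_nil. exact: cst_continuous.
under eq_fun do rewrite big_cons.
move=> t; exact: (continuousD (HF a t) (IH t)).
Qed.

Lemma exists_min m n (B : 'M[R]_(m, n)) v x : convA B v ->
  exists2 z, Zset B v z & forall z', Zset B v z' -> l1norm (x - z) <= l1norm (x - z').
Proof.
move=> [z0 sz0 Bz0].
pose T := [set r : 'rV[R]_n | Zset B v r^T].
pose g := fun r : 'rV[R]_n => \sum_i `|x i 0 - r 0 i|.
have gE : forall r, g r = l1norm (x - r^T).
  by move=> r; rewrite /g /l1norm; apply: eq_bigr => i _; rewrite !mxE.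
have T0 : T !=set0 by exists z0^T; rewrite /T /= trmxK.
have gc : continuous g.
  apply: cont_sum => i r.
  apply: (continuous_comp (f := fun r : 'rV[R]_n => x i 0 - r 0 i)); last first.
    exact: norm_continuous.
  apply: continuousB; first exact: cst_continuous.
  exact: coord_continuous.
have Tc : compact T.
  apply: bounded_closed_compact.
    rewrite /bounded_near /=; near=> M => r [[r0 r1] _] /=.
    rewrite [leLHS]/Num.norm /= mx_normrE.
    apply: (@le_trans _ _ 1); last by near: M; apply: nbhs_pinfty_ge; rewrite real1.
    apply: bigmax_le => // -[a b] _ /=.
    rewrite (ord1 a) ger0_norm; last by move: (r0 b); rewrite mxE.
    rewrite -r1 (bigD1 b) //= mxE lerDl.
    by apply: sumr_ge0 => i _; move: (r0 i); rewrite mxE.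
  have -> : T = (\bigcap_(i in setT) [set r : 'rV[R]_n | 0 <= r 0 i]) `&`
     [set r | \sum_i r 0 i = 1] `&`
     (\bigcap_(k in setT) [set r : 'rV[R]_n | \sum_i B k i * r 0 i = v k 0]).
    apply/seteqP; split => r.
      move=> [[r0 r1] rB]; split; first split.
      - by move=> i _; move: (r0 i); rewrite mxE.
      - by rewrite -r1 /=; apply: eq_bigr => i _; rewrite mxE.
      - move=> k _ /=; rewrite -rB mxE; apply: eq_bigr => i _; by rewrite mxE.
    move=> [[r0 r1] rB]; split; first split.
    - by move=> i; rewrite mxE; exact: r0.
    - by rewrite -r1; apply: eq_bigr => i _; rewrite mxE.
    - apply/matrixP => k l; rewrite (ord1 l) -(rB k I) mxE.
      by apply: eq_bigr => i _; rewrite mxE.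
  apply: closedI; first apply: closedI.
  - apply: closed_bigI => i _.
    have H := (@preimage_closed _ R (fun r : 'rV[R]_n => r 0 i) [set x | 0 <= x]).
    apply: H; last exact: closed_ge.
    move=> r _; exact: coord_continuous.
  - have H := (@preimage_closed _ R (fun r : 'rV[R]_n => \sum_i r 0 i) [set x | x = 1]).
    apply: H; last exact: closed_eq.
    move=> r _; apply: cont_sum => i; exact: coord_continuous.
  - apply: closed_bigI => k _.
    have H := (@preimage_closed _ R (fun r : 'rV[R]_n => \sum_i B k i * r 0 i) [set x | x = v k 0]).
    apply: H; last exact: closed_eq.
    move=> r _; apply: cont_sum => i t.
    apply: continuousM; first exact: cst_continuous.
    exact: coord_continuous.
have [c cT cmin] := compact_EVT_min T0 Tc (continuous_subspaceT (A:=T) gc).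
exists c^T; first by move: cT; rewrite inE.
move=> z' hz'; rewrite -gE -(trmxK z') -gE; apply: cmin.
by rewrite inE /T /= trmxK.
Unshelve. all: by end_near.
Qed.

End Aux.
Arguments ev {R n}.


Section P2.
Variable R : realType.

Definition pp (a : R) := if 0 <= a then a else 0.
Definition pn (a : R) := if 0 <= a then 0 else - a.

Lemma ppnE a : pp a - pn a = a.
Proof. by rewrite /pp /pn; case: ifP => _; rewrite ?subr0 ?sub0r ?opprK. Qed.
Lemma ppn_norm a : pp a + pn a = `|a|.
Proof.
rewrite /pp /pn; case: ifP => h; first by rewrite addr0 ger0_norm.
by rewrite add0r ltr0_norm // ltNge h.
Qed.
Lemma pp_ge0 a : 0 <= pp a.
Proof. by rewrite /pp; case: ifP. Qed.
Lemma pn_ge0 a : 0 <= pn a.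
Proof. rewrite /pn; case: ifP => // /negbT; rewrite -ltNge => h; lra. Qed.

Lemma l1norm_ge0 n (x : 'cV[R]_n) : 0 <= l1norm x.
Proof. by apply: sumr_ge0 => i _. Qed.

Lemma l1norm_eq0 n (x : 'cV[R]_n) : l1norm x = 0 -> x = 0.
Proof.
move=> h; apply/matrixP => i j; rewrite (ord1 j) mxE.
have := @psumr_eq0P _ _ xpredT (fun i => `|x i 0|) (fun _ _ => normr_ge0 _) h i isT.
by move/eqP; rewrite normr_eq0 => /eqP.
Qed.

Lemma norm2_ge0 m (v : 'cV[R]_m) : 0 <= norm2 v.
Proof. exact: sqrtr_ge0. Qed.

Lemma norm2_sq m (v : 'cV[R]_m) : norm2 v ^+ 2 = \sum_i (v i 0) ^+ 2.
Proof. by rewrite /norm2 sqr_sqrtr // sumr_ge0 // => i _; exact: sqr_ge0. Qed.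

Lemma norm2N m (v : 'cV[R]_m) : norm2 (- v) = norm2 v.
Proof. by rewrite /norm2; congr Num.sqrt; apply: eq_bigr => i _; rewrite mxE sqrrN. Qed.

Lemma wCS (I : finType) (l a : I -> R) : (forall i, 0 <= l i) ->
  (\sum_i l i * a i) ^+ 2 <= (\sum_i l i) * (\sum_i l i * a i ^+ 2).
Proof.
move=> l0.
have key : \sum_i \sum_j l i * l j * (a i - a j) ^+ 2 =
   2 * ((\sum_i l i) * (\sum_i l i * a i ^+ 2) - (\sum_i l i * a i) ^+ 2).
  have e1 : \sum_i \sum_j l i * l j * (a i - a j) ^+ 2 =
     \sum_i \sum_j (l j * (l i * a i ^+ 2)) + \sum_i \sum_j (l i * (l j * a j ^+ 2))
     - 2 * \sum_i \sum_j (l i * a i) * (l j * a j).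
    apply/esym.
    rewrite mulr_sumr; under [X in _ - X]eq_bigr do rewrite mulr_sumr.
    rewrite -big_split -sumrB /=; apply: eq_bigr => i _.
    rewrite -big_split -sumrB /=; apply: eq_bigr => j _; ring.
  rewrite e1 exchange_big /= -big_split /=.
  rewrite expr2 mulr_suml.
  have e2 : forall i, \sum_j (l i * a i) * (l j * a j) = (l i * a i) * \sum_j l j * a j.
    by move=> i; rewrite mulr_sumr.
  under [X in _ - 2 * X]eq_bigr do rewrite e2.
  rewrite mulr_suml.
  have e3 : \sum_i (\sum_j l i * (l j * a j ^+ 2) + \sum_j l i * (l j * a j ^+ 2))
        = 2 * ((\sum_i l i) * \sum_j l j * a j ^+ 2).
    under eq_bigr do rewrite -!mulr_sumr.
    rewrite big_split /= -!mulr_suml; ring.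
  rewrite e3 -!mulr_suml; ring.
have : 0 <= \sum_i \sum_j l i * l j * (a i - a j) ^+ 2.
  by apply: sumr_ge0 => i _; apply: sumr_ge0 => j _; apply: mulr_ge0; [exact: mulr_ge0 | exact: sqr_ge0].
rewrite key => h; lra.
Qed.

End P2.


Section P3.
Variable R : realType.

Lemma diam_ub m n (B : 'M[R]_(m, n)) i j : norm2 (col i B - col j B) <= diam B.
Proof.
rewrite /diam; apply: ub_le_sup; last by exists i => //; exists j.
exists (\sum_(pr : 'I_n * 'I_n) norm2 (col pr.1 B - col pr.2 B)).
move=> y [a _ [b _ <-]].
rewrite (bigD1 (a, b)) //= lerDl; apply: sumr_ge0 => pr _; exact: norm2_ge0.
Qed.

Lemma diam_ge0 m n (B : 'M[R]_(m, n)) (i : 'I_n) : 0 <= diam B.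
Proof. exact: le_trans (norm2_ge0 _) (diam_ub B i i). Qed.

Lemma sum_simplex_diff n (x z : 'cV[R]_n) : simplex x -> simplex z ->
  \sum_k (x - z) k 0 = 0.
Proof.
move=> [_ sx] [_ sz]; under eq_bigr do rewrite !mxE.
by rewrite sumrB sx sz subrr.
Qed.

Lemma Lbound m n (B : 'M[R]_(m, n)) (x z : 'cV[R]_n) : simplex x -> simplex z ->
  norm2 (B *m (x - z)) ^+ 2 <= diam B ^+ 2 * l1norm (x - z) ^+ 2 / 4.
Proof.
move=> sx sz.
set w := x - z.
pose P := fun k => pp (w k 0).
pose N := fun k => pn (w k 0).
pose t := \sum_k P k.
have wE : forall k, w k 0 = P k - N k by move=> k; rewrite /P /N ppnE.
have sw : \sum_k w k 0 = 0 by exact: sum_simplex_diff.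
have sN : \sum_k N k = t.
  have : \sum_k w k 0 = t - \sum_k N k.
    by rewrite /t -sumrB; apply: eq_bigr => k _; rewrite wE.
  rewrite sw => h; lra.
have l1E : l1norm w = 2 * t.
  rewrite /l1norm; under eq_bigr do rewrite -ppn_norm.
  by rewrite big_split /= -/t; rewrite /N in sN; rewrite sN; ring.
have t0 : 0 <= t by apply: sumr_ge0 => k _; exact: pp_ge0.
have [t_eq0|tpos] := eqVneq t 0.
  have P0 : forall k, P k = 0.
    move=> k; exact: (@psumr_eq0P _ _ xpredT P (fun k _ => pp_ge0 _) t_eq0 k isT).
  have N0 : forall k, N k = 0.
    move=> k; rewrite t_eq0 in sN.
    exact: (@psumr_eq0P _ _ xpredT N (fun k _ => pn_ge0 _) sN k isT).
  have -> : w = 0 by apply/matrixP => k l; rewrite (ord1 l) wE P0 N0 subrr mxE.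
  rewrite mulmx0 /norm2 big1 ?sqrtr0; first by rewrite expr0n /= mulr_ge0 // mulr_ge0 // sqr_ge0.
  by move=> k _; rewrite mxE expr0n.
have tp : 0 < t by rewrite lt_neqAle eq_sym tpos t0.
pose lam := fun pr : 'I_n * 'I_n => P pr.1 * N pr.2.
pose a := fun k (pr : 'I_n * 'I_n) => B k pr.1 - B k pr.2.
have hlam : \sum_pr lam pr = t ^+ 2.
  rewrite /lam -(pair_big xpredT xpredT (fun i j => P i * N j)) /=.
  rewrite expr2 -[X in _ = _ * X]sN /t mulr_suml; apply: eq_bigr => i _; by rewrite mulr_sumr.
have hB : forall k, (B *m w) k 0 = t^-1 * \sum_pr lam pr * a k pr.
  move=> k; rewrite /lam /a -(pair_big xpredT xpredT (fun i j => P i * N j * (B k i - B k j))) /=.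
  have e1 : \sum_i \sum_j P i * N j * (B k i - B k j) =
     (\sum_i P i * B k i) * (\sum_j N j) - (\sum_i P i) * (\sum_j N j * B k j).
    rewrite !mulr_suml -sumrB; apply: eq_bigr => i _.
    rewrite !mulr_sumr -sumrB; apply: eq_bigr => j _; ring.
  rewrite e1 sN -/t mxE.
  have e2 : \sum_j B k j * w j 0 = \sum_i P i * B k i - \sum_j N j * B k j.
    rewrite -sumrB; apply: eq_bigr => j _; rewrite wE; ring.
  rewrite e2; field; exact: tpos.
rewrite norm2_sq l1E.
under eq_bigr do rewrite hB.
apply: (@le_trans _ _ (\sum_k t^-1 ^+ 2 * (t ^+ 2 * \sum_pr lam pr * a k pr ^+ 2))).
  apply: ler_sum => k _; rewrite exprMn -hlam; apply: ler_wpM2l; first exact: sqr_ge0.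
  apply: wCS => pr; rewrite /lam mulr_ge0 //; [exact: pp_ge0 | exact: pn_ge0].
have e3 : \sum_k t^-1 ^+ 2 * (t ^+ 2 * \sum_pr lam pr * a k pr ^+ 2)
   = \sum_pr lam pr * norm2 (col pr.1 B - col pr.2 B) ^+ 2.
  have -> : \sum_k t^-1 ^+ 2 * (t ^+ 2 * \sum_pr lam pr * a k pr ^+ 2) =
            \sum_k \sum_pr lam pr * a k pr ^+ 2.
    apply: eq_bigr => k _; rewrite mulrA -exprMn mulVf ?expr1n ?mul1r //.
  rewrite exchange_big /=; apply: eq_bigr => pr _.
  rewrite norm2_sq mulr_sumr; apply: eq_bigr => k _.
  by rewrite /a !mxE.
rewrite e3.
apply: (@le_trans _ _ (\sum_pr lam pr * diam B ^+ 2)).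
  apply: ler_sum => pr _; apply: ler_wpM2l.
    rewrite /lam mulr_ge0 //; [exact: pp_ge0 | exact: pn_ge0].
  rewrite expr2 [leRHS]expr2; apply: ler_pM; try exact: norm2_ge0; exact: diam_ub.
rewrite -mulr_suml hlam.
have -> : diam B ^+ 2 * (2 * t) ^+ 2 / 4 = t ^+ 2 * diam B ^+ 2 by field.
by [].
Qed.

End P3.


Section P4.
Variable R : realType.

Lemma simplex_le1 n (z : 'cV[R]_n) k : simplex z -> z k 0 <= 1.
Proof.
move=> [z0 z1]; rewrite -z1 (bigD1 k) //= lerDl.
by apply: sumr_ge0 => i _.
Qed.

Lemma simplex_one n (z : 'cV[R]_n) k : simplex z -> z k 0 = 1 -> z = ev k.
Proof.
move=> [z0 z1] zk; have : \sum_(i | i != k) z i 0 = 0.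
  by move: z1; rewrite (bigD1 k) //= zk => h; lra.
move=> h; apply/matrixP => i l; rewrite (ord1 l) mxE.
have [->|ik] := eqVneq i k; first by rewrite zk.
exact: (@psumr_eq0P _ _ (fun i => i != k) (fun i => z i 0) (fun i _ => z0 i) h i ik).
Qed.

Lemma split_simplex n (z : 'cV[R]_n) k : simplex z -> 0 < z k 0 < 1 ->
  exists r, [/\ simplex r, r k 0 = 0, (forall j, z j 0 = 0 -> r j 0 = 0) &
    z = (1 - z k 0) *: r + z k 0 *: ev k].
Proof.
move=> [z0 z1] /andP[zk0 zk1].
have h1 : 1 - z k 0 != 0 by apply/eqP => h; lra.
exists ((1 - z k 0)^-1 *: (z - z k 0 *: ev k)); split.
- split.
    move=> i; rewrite !mxE; have [->|ik] := eqVneq i k.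
      by rewrite mulr1 subrr mulr0.
    rewrite mulr0 subr0 mulr_ge0 // invr_ge0; lra.
  under eq_bigr do rewrite !mxE.
  rewrite -mulr_sumr sumrB -mulr_sumr.
  have hs : \sum_i (i == k)%:R = 1 :> R.
    by rewrite -[RHS](@sum_ev R n k); apply: eq_bigr => i _; rewrite mxE.
  by rewrite hs z1 mulr1 mulVf.
- by rewrite !mxE eqxx mulr1 subrr mulr0.
- move=> j zj; rewrite !mxE zj; have [jk|jk] := eqVneq j k.
    by move: zj; rewrite jk => h; lra.
  by rewrite mulr0 subrr mulr0.
- apply/matrixP => i l; rewrite (ord1 l) !mxE; field; exact: h1.
Qed.

Lemma face_support m n (B : 'M[R]_(m, n)) F (z : 'cV[R]_n) k :
  is_face (convA B) F -> simplex z -> F (B *m z) -> 0 < z k 0 -> F (col k B).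
Proof.
move=> [FC Fcv Fext] sz Fz zk.
have [zk1|zk1] := eqVneq (z k 0) 1.
  by move: Fz; rewrite (simplex_one sz zk1) mul_ev.
have zk1' : z k 0 < 1 by rewrite lt_neqAle zk1 simplex_le1.
have hk : 0 < z k 0 < 1 by rewrite zk zk1'.
have [r [sr _ _ zE]] := split_simplex sz hk.
have : F ((1 - z k 0) *: (B *m r) + z k 0 *: col k B).
  by rewrite -mul_ev !scalemxAr -mulmxDr -zE.
move/(Fext _ _ _ _ _ _) => []; last by [].
- by exists r.
- exact: convA_col.
- by rewrite zk zk1'.
Qed.

Lemma hull_sub m n (B : 'M[R]_(m, n)) (F : set 'cV[R]_m) :
  convex_set F -> (forall j, F (col j B)) -> convA B `<=` F.
Proof.
move=> Fcv Fcol _ [z sz <-].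
suff H : forall k (z : 'cV[R]_n), leq #|[pred j | z j 0 != 0]| k -> simplex z ->
  F (B *m z) by exact: (H _ z (leqnn _) sz).
elim=> [|k IH] {}z hk {}sz.
  exfalso; move: hk; rewrite leqn0 => /eqP/card0_eq h.
  case: sz => _; rewrite big1 => [/eqP|i _]; first by rewrite eq_sym oner_eq0.
  by have := h i; rewrite !inE /= => /negbFE/eqP.
have [j zj] : exists j, z j 0 != 0.
  apply/existsP; apply: contraT; rewrite negb_exists => /forallP h.
  case: sz => _; rewrite big1 => [/eqP|i _]; first by rewrite eq_sym oner_eq0.
  by have := h i; rewrite negbK => /eqP.
have zj0 : 0 < z j 0 by rewrite lt_neqAle eq_sym zj; case: sz => + _; apply.
have [zj1|zj1] := eqVneq (z j 0) 1.
  by rewrite (simplex_one sz zj1) mul_ev.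
have zj1' : z j 0 < 1 by rewrite lt_neqAle zj1 simplex_le1.
have hj : 0 < z j 0 < 1 by rewrite zj0 zj1'.
have [r [sr rj rz zE]] := split_simplex sz hj.
rewrite zE mulmxDr -!scalemxAr mul_ev.
apply: Fcv; last by rewrite ltW // ltW.
- apply: IH => //.
  rewrite -ltnS; apply: leq_trans hk.
  apply: proper_card; apply/properP; split.
    apply/fintype.subsetP => i; rewrite !inE; apply: contraNN => /eqP /rz ->; by [].
  by exists j; rewrite !inE ?rj ?eqxx.
- exact: Fcol.
Qed.

Lemma proper_face_col m n (B : 'M[R]_(m, n)) F :
  is_face (convA B) F -> F <> convA B -> exists j, ~ F (col j B).
Proof.
move=> [FC Fcv _] Fne; apply: contra_notP Fne => h.
have h' : forall j, F (col j B) by move=> j; apply: contra_notP (h) => hj; exists j.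
by apply/seteqP; split => //; exact: hull_sub.
Qed.

End P4.


Section P5.
Variable R : realType.
Variables (m n : nat) (B : 'M[R]_(m, n)).

Lemma shrink (y c : 'cV[R]_m) e1 e : convA B y -> convA B (y + e1 *: (y - c)) ->
  0 < e <= e1 -> convA B (y + e *: (y - c)).
Proof.
move=> hy h1 /andP[e0 ee1].
have e10 : e1 != 0 by apply/eqP => h; lra.
have hs : 0 <= e / e1 <= 1.
  apply/andP; split; first by rewrite divr_ge0 //; lra.
  by rewrite ler_pdivrMr ?mul1r //; lra.
have := convA_comb2 hy h1 hs.
have -> : (1 - e / e1) *: y + e / e1 *: (y + e1 *: (y - c)) = y + e *: (y - c) => //.
apply/matrixP => i j; rewrite !mxE; field; exact: e10.
Qed.

Lemma ext_left (y a b : 'cV[R]_m) s e : convA B y -> convA B a -> convA B b ->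
  0 < s < 1 -> 0 < e -> convA B (y + e *: (y - ((1 - s) *: a + s *: b))) ->
  exists2 d, 0 < d & convA B (y + d *: (y - a)).
Proof.
move=> hy ha hb /andP[s0 s1] e0 hc.
have k0 : 0 < 1 + s * e by rewrite ltr_wpDr // mulr_ge0 //; lra.
have k0' : 1 + s * e != 0 by rewrite gt_eqF.
exists ((1 - s) * e / (2 * (1 + s * e))).
  by rewrite divr_gt0 ?mulr_gt0 //; lra.
have := convA_comb3 hy hc hb (l0 := 2^-1) (l1 := (2 * (1 + s * e))^-1)
   (l2 := s * e / (2 * (1 + s * e))).
have -> : 2^-1 *: y + (2 * (1 + s * e))^-1 *: (y + e *: (y - ((1 - s) *: a + s *: b))) +
  s * e / (2 * (1 + s * e)) *: b = y + (1 - s) * e / (2 * (1 + s * e)) *: (y - a).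
  apply/matrixP => i j; rewrite !mxE; field; exact: k0'.
apply.
- by rewrite invr_ge0.
- by rewrite invr_ge0 mulr_ge0 //; lra.
- by rewrite divr_ge0 ?mulr_ge0 //; lra.
- by field.
Qed.

Definition genface (y : 'cV[R]_m) : set 'cV[R]_m :=
  [set c | convA B c /\ exists2 e, 0 < e & convA B (y + e *: (y - c))].

Lemma genface_y y : convA B y -> genface y y.
Proof. by move=> hy; split => //; exists 1 => //; rewrite subrr scaler0 addr0. Qed.

Lemma genface_face y : convA B y -> is_face (convA B) (genface y).
Proof.
move=> hy; split.
- by move=> c [].
- move=> c1 c2 s [h1 [e1 e1p H1]] [h2 [e2 e2p H2]] hs; split.
    exact: convA_comb2.
  exists (Order.min e1 e2); first by rewrite lt_min e1p e2p.
  have m1 : 0 < Order.min e1 e2 <= e1 by rewrite lt_min e1p e2p ge_min lexx.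
  have m2 : 0 < Order.min e1 e2 <= e2 by rewrite lt_min e1p e2p ge_min lexx orbT.
  have H1' := shrink hy H1 m1.
  have H2' := shrink hy H2 m2.
  have := convA_comb2 H1' H2' hs.
  set e := Order.min e1 e2.
  have -> : (1 - s) *: (y + e *: (y - c1)) + s *: (y + e *: (y - c2)) =
    y + e *: (y - ((1 - s) *: c1 + s *: c2)) => //.
  apply/matrixP => i j; rewrite !mxE; ring.
- move=> a b s ha hb hs [hc [e e0 He]]; split.
    split => //; exact: ext_left He.
  split => //.
  have hs' : 0 < 1 - s < 1 by move: hs => /andP[? ?]; apply/andP; split; lra.
  apply: (ext_left (s := 1 - s) (e := e) hy hb ha hs' e0).
  have -> : (1 - (1 - s)) *: b + (1 - s) *: a = (1 - s) *: a + s *: b.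
    by rewrite addrC; congr (_ + _); congr (_ *: _); ring.
  exact: He.
Qed.

End P5.



Section P6.
Variable R : realType.

Lemma entry_bound (W u d e' c : R) (b : bool) : 0 < u <= 1 -> 0 < d ->
  0 <= e' <= 1 -> 0 <= c -> (b -> d <= pp W) ->
  `|W + u * pn W - d * e' * b%:R - c| <= `|W| - u * pn W - d * e' * b%:R + c.
Proof.
move=> /andP[u0 u1] d0 /andP[e0 e1] c0 hb.
suff hA : `|W + u * pn W - d * e' * b%:R| = `|W| - u * pn W - d * e' * b%:R.
  apply: le_trans (ler_normB _ _) _; rewrite hA (ger0_norm c0); lra.
case: b hb => hb.
  have := hb isT; rewrite /pp /pn; case: ifP => hW dW; last by lra.
  rewrite mulr0 addr0 mulr1 subr0 (ger0_norm hW) ger0_norm //.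
  have : d * e' <= d by rewrite ler_piMr //; lra.
  lra.
rewrite mulr0 !subr0 /pn; case: ifP => hW; first by rewrite mulr0 addr0 subr0.
move/negbT: hW; rewrite -ltNge => hW.
rewrite (ltr0_norm hW) ler0_norm; last by nra.
lra.
Qed.

Lemma norm2Z_sq m (t : R) (u : 'cV[R]_m) : norm2 (t *: u) ^+ 2 = t ^+ 2 * norm2 u ^+ 2.
Proof.
rewrite !norm2_sq mulr_sumr; apply: eq_bigr => i _; by rewrite mxE exprMn.
Qed.

Lemma sum_delta n (j : 'I_n) : \sum_k (k == j)%:R = 1 :> R.
Proof. by rewrite -[RHS](@sum_ev R n j); apply: eq_bigr => i _; rewrite mxE. Qed.

Variables (m n : nat) (B : 'M[R]_(m, n)).

Lemma face_bound (v : 'cV[R]_m) (x z : 'cV[R]_n) : simplex x -> Zset B v z ->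
  (forall z', Zset B v z' -> l1norm (x - z) <= l1norm (x - z')) -> x != z ->
  exists F y w, [/\ is_face (convA B) F, F !=set0, F <> convA B, F y &
      conv_cols_notin B F w] /\
    norm2 (B *m x - v) ^+ 2 / l1norm (x - z) ^+ 2 = norm2 (y - w) ^+ 2 / 4.
Proof.
move=> sx [sz Bz] zmin xz.
set w0 := x - z.
pose P := fun k => pp (w0 k 0).
pose N := fun k => pn (w0 k 0).
pose t := \sum_k P k.
have wE : forall k, w0 k 0 = P k - N k by move=> k; rewrite /P /N ppnE.
have sw : \sum_k w0 k 0 = 0 by exact: sum_simplex_diff.
have sN : \sum_k N k = t.
  have : \sum_k w0 k 0 = t - \sum_k N k.
    by rewrite /t -sumrB; apply: eq_bigr => k _; rewrite wE.
  rewrite sw => h; mlra.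
have l1E : l1norm w0 = 2 * t.
  rewrite /l1norm; under eq_bigr do rewrite -ppn_norm.
  by rewrite big_split /= -/t; rewrite /N in sN; rewrite sN; ring.
have t0 : 0 <= t by apply: sumr_ge0 => k _; exact: pp_ge0.
have P0 : forall k, 0 <= P k by move=> k; exact: pp_ge0.
have N0 : forall k, 0 <= N k by move=> k; exact: pn_ge0.
have [t_eq0|tpos] := eqVneq t 0.
  exfalso; move/negP: xz; apply; apply/eqP.
  have PP0 : forall k, P k = 0.
    move=> k; exact: (@psumr_eq0P _ _ xpredT P (fun k _ => pp_ge0 _) t_eq0 k isT).
  have NN0 : forall k, N k = 0.
    move=> k; rewrite t_eq0 in sN.
    exact: (@psumr_eq0P _ _ xpredT N (fun k _ => pn_ge0 _) sN k isT).
  apply/eqP; rewrite -subr_eq0; apply/eqP/matrixP => k l.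
  by rewrite (ord1 l) -/w0 wE PP0 NN0 subrr mxE.
have tp : 0 < t by rewrite lt_neqAle eq_sym tpos t0.
pose ph : 'cV[R]_n := \col_k (P k / t).
pose qh : 'cV[R]_n := \col_k (N k / t).
have sph : simplex ph.
  split; first by move=> k; rewrite mxE divr_ge0.
  under eq_bigr do rewrite mxE.
  by rewrite -mulr_suml mulfV.
have sqh : simplex qh.
  split; first by move=> k; rewrite mxE divr_ge0.
  under eq_bigr do rewrite mxE.
  by rewrite -mulr_suml sN mulfV.
pose y := B *m qh.
pose wv := B *m ph.
have hy : convA B y by exists qh.
have w0E : w0 = t *: (ph - qh).
  apply/matrixP => k l; have hk := wE k; rewrite /w0 !mxE in hk; rewrite (ord1 l) !mxE hk; field; exact: tpos.
have Bxv : B *m x - v = t *: (wv - y).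
  by rewrite -Bz -mulmxBr -/w0 w0E -scalemxAr mulmxBr.
have NZ : forall k, N k <= z k 0.
  move=> k; rewrite /N /pn /w0 !mxE; case: ifP => _.
    by case: sz => + _; apply.
  by case: sx => hx _; have := hx k; mlra.
pose F := genface B y.
have key : forall j, F (col j B) -> P j = 0.
  move=> j [_ [e e0 He]]; apply/eqP; apply: contraT => Pj.
  have Pjp : 0 < P j by rewrite lt_neqAle eq_sym Pj P0.
  case: He => r sr Br.
  pose d := Order.min t (P j).
  have dp : 0 < d by rewrite lt_min tp Pjp.
  have dt : d <= t by rewrite ge_min lexx.
  have dP : d <= P j by rewrite ge_min lexx orbT.
  pose e' := e / (1 + e).
  have e1 : 1 + e != 0 by apply/eqP => h; mlra.
  have e'0 : 0 <= e' <= 1.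
    apply/andP; split; first by rewrite divr_ge0 //; mlra.
    by rewrite ler_pdivrMr ?mul1r; mlra.
  pose z' := z - d *: qh + d *: ((1 + e)^-1 *: r + e' *: ev j).
  have hz' : Zset B v z'.
    split; first split.
    - move=> k; rewrite !mxE.
      have h1 : d * (N k / t) <= N k.
        rewrite mulrCA mulrC; apply: ler_piMl => //.
        by rewrite ler_pdivrMr ?mul1r.
      have h2 : 0 <= d * ((1 + e)^-1 * r k 0 + e' * (k == j)%:R).
        apply: mulr_ge0; first mlra.
        apply: addr_ge0; apply: mulr_ge0 => //.
        + by rewrite invr_ge0; mlra.
        + by case: sr => + _; apply.
        + by case/andP: e'0.
      have := NZ k; mlra.
    - under eq_bigr do rewrite !mxE.
      rewrite !big_split /= sumrN -!mulr_sumr big_split /= -!mulr_sumr sum_delta.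
      have -> : \sum_i N i / t = 1 by rewrite -mulr_suml sN mulfV.
      case: sz => _ ->; case: sr => _ ->.
      rewrite /e'; field; exact: e1.
    - rewrite mulmxDr mulmxBr -!scalemxAr mulmxDr -!scalemxAr Br mul_ev Bz -/y.
      apply/matrixP => k l; rewrite !mxE /e'; field; exact: e1.
  have hlt : l1norm (x - z') <= l1norm w0 - 2 * d * e'.
    have entry : forall k, (x - z') k 0 = w0 k 0 + (d / t) * N k
        - d * e' * (k == j)%:R - d * (1 + e)^-1 * r k 0.
      move=> k; rewrite /w0 !mxE; field; apply/andP; split => //.
    apply: (@le_trans _ _ (\sum_k (`|w0 k 0| - (d / t) * N k - d * e' * (k == j)%:R
                                  + d * (1 + e)^-1 * r k 0))).
      apply: ler_sum => k _; rewrite entry.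
      apply: entry_bound => //.
      - by apply/andP; split; [rewrite divr_gt0 | rewrite ler_pdivrMr ?mul1r].
      - rewrite mulr_ge0 // ?mulr_ge0 //; first mlra.
        + by rewrite invr_ge0; mlra.
        + by case: sr => + _; apply.
      - by move/eqP => ->.
    rewrite big_split /= sumrB sumrB -!mulr_sumr sum_delta.
    case: sr => _ ->; rewrite sN -/(l1norm w0).
    rewrite /e'; have -> : d / t * t = d by field; exact: tpos.
    have h : d / (1 + e) - d = - (d * (e / (1 + e))) by field.
    have h2 : 2 * d * (e / (1 + e)) = 2 * (d * (e / (1 + e))) by ring.
    rewrite h2 !mulr1; mlra.
  have := zmin z' hz'.
  have : 0 < 2 * d * e'.
    rewrite /e'; apply: mulr_gt0; [apply: mulr_gt0 => // | apply: divr_gt0]; mlra.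
  rewrite -/w0; mlra.
have [j Pj] : exists j, P j != 0.
  apply/existsP; apply: contraT; rewrite negb_exists => /forallP h.
  exfalso; move/eqP: tpos; apply; rewrite /t big1 // => k _.
  by have := h k; rewrite negbK => /eqP.
exists F, y, wv; split; first split.
- exact: genface_face.
- by exists y; exact: genface_y.
- move=> h; have := convA_col B j; rewrite -h => /key hj.
  by move/eqP: Pj.
- exact: genface_y.
- by exists ph => //; split => // k Fk; rewrite mxE key // mul0r.
rewrite Bxv norm2Z_sq -/w0 l1E -opprB norm2N.
field; exact: tpos.
Qed.

End P6.



Section P7.
Variable R : realType.

Lemma inf_ge0 (E : set R) : (forall x, E x -> 0 <= x) -> 0 <= inf E.
Proof.
move=> h; have [[e Ee]|E0] := pselect (exists e, E e).
  by apply: lb_le_inf; [exists e | move=> y /h].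
have -> : E = set0 by apply/seteqP; split => // y Ey; exfalso; apply: E0; exists y.
by rewrite inf0.
Qed.

Lemma inf_le (E : set R) x : (forall x, E x -> 0 <= x) -> E x -> inf E <= x.
Proof. by move=> h Ex; apply: ge_inf => //; exists 0 => y /h. Qed.

Lemma setdist_ge0 m (F G : set 'cV[R]_m) : 0 <= setdist F G.
Proof. by apply: inf_ge0 => _ [u _ [w _ <-]]; exact: norm2_ge0. Qed.

Lemma setdist_le m (F G : set 'cV[R]_m) u w : F u -> G w -> setdist F G <= norm2 (u - w).
Proof.
move=> Fu Gw; apply: inf_le; last by exists u => //; exists w.
by move=> _ [a _ [b _ <-]]; exact: norm2_ge0.
Qed.

Variables (m n : nat) (B : 'M[R]_(m, n)).

Lemma facial_ge0 : 0 <= facial_dist B.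
Proof. by apply: inf_ge0 => _ [F _ <-]; exact: setdist_ge0. Qed.

Lemma facial_le F : is_face (convA B) F -> F !=set0 -> F <> convA B ->
  facial_dist B <= setdist F (conv_cols_notin B F).
Proof.
move=> h1 h2 h3; apply: inf_le; last by exists F.
by move=> _ [G _ <-]; exact: setdist_ge0.
Qed.

Definition rset : set (\bar R) :=
  [set r | exists (v : 'cV[R]_m) (x : 'cV[R]_n),
     [/\ convA B v, simplex x, ~ Zset B v x &
         r = ((norm2 (B *m x - v)) ^+ 2 / (distZ B x v) ^+ 2)%:E]].

Lemma distZ_eq v (x z : 'cV[R]_n) : Zset B v z ->
  (forall z', Zset B v z' -> l1norm (x - z) <= l1norm (x - z')) ->
  distZ B x v = l1norm (x - z).
Proof.
move=> hz zmin; apply/le_anti/andP; split.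
  by apply: inf_le; [move=> _ [z' _ <-]; exact: l1norm_ge0 | exists z].
by apply: lb_le_inf; [exists (l1norm (x - z)); exists z | move=> _ [z' /zmin h <-]].
Qed.

Lemma l1norm_simplex_le2 (x z : 'cV[R]_n) : simplex x -> simplex z -> l1norm (x - z) <= 2.
Proof.
move=> [x0 x1] [z0 z1].
apply: (@le_trans _ _ (\sum_k (x k 0 + z k 0))).
  apply: ler_sum => k _; rewrite !mxE.
  apply: le_trans (ler_normB _ _) _.
  by rewrite !ger0_norm.
by rewrite big_split /= x1 z1.
Qed.

Lemma rset_ge0 r : rset r -> (0 <= r)%E.
Proof.
move=> [v [x [_ _ _ ->]]]; rewrite lee_fin divr_ge0 // ?sqr_ge0 //.
Qed.

Lemma rset_upper r : rset r -> (r <= (diam B ^+ 2 / 4)%:E)%E.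
Proof.
move=> [v [x [hv sx nZ ->]]]; rewrite lee_fin.
have [z hz zmin] := exists_min x hv.
rewrite (distZ_eq hz zmin).
have Bxv : B *m x - v = B *m (x - z) by case: hz => _ <-; rewrite mulmxBr.
rewrite Bxv.
have [d0|dn0] := eqVneq (l1norm (x - z)) 0.
  rewrite d0 expr0n /= invr0 mulr0; apply: divr_ge0 => //; exact: sqr_ge0.
have dp : 0 < l1norm (x - z) ^+ 2.
  by rewrite exprn_gt0 // lt_neqAle eq_sym dn0 l1norm_ge0.
rewrite ler_pdivrMr //.
apply: le_trans (Lbound B sx (proj1 hz)) _.
by rewrite mulrAC.
Qed.

Lemma rset_lower r : rset r -> (((facial_dist B) ^+ 2 / 4)%:E <= r)%E.
Proof.
move=> [v [x [hv sx nZ ->]]]; rewrite lee_fin.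
have [z hz zmin] := exists_min x hv.
rewrite (distZ_eq hz zmin).
have xz : x != z by apply/eqP => e; apply: nZ; rewrite e.
have [F [y [w [[h1 h2 h3 h4 h5] ->]]]] := face_bound sx hz zmin xz.
rewrite ler_pM2r ?invr_gt0 //.
have hle : facial_dist B <= norm2 (y - w).
  apply: le_trans (facial_le h1 h2 h3) _; exact: setdist_le.
rewrite expr2 [leRHS]expr2; apply: ler_pM => //; exact: facial_ge0.
Qed.

Lemma face_instance F u (x : 'cV[R]_n) : is_face (convA B) F -> F u -> simplex x ->
  (forall j, F (col j B) -> x j 0 = 0) ->
  rset ((norm2 (u - B *m x)) ^+ 2 / 4)%:E.
Proof.
move=> hF Fu sx xF.
have hu : convA B u by case: hF => + _ _; apply.
have disj : forall z, Zset B u z -> forall k, x k 0 * z k 0 = 0.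
  move=> z [sz Bz] k; have [zk0|zkn] := eqVneq (z k 0) 0; first by rewrite zk0 mulr0.
  have zkp : 0 < z k 0 by rewrite lt_neqAle eq_sym zkn; case: sz => + _; apply.
  have := face_support hF sz (ltac:(by rewrite Bz)) zkp.
  by move/xF ->; rewrite mul0r.
have l2 : forall z, Zset B u z -> l1norm (x - z) = 2.
  move=> z hz; have [sz _] := hz; case: (sx) => x0 x1; case: (sz) => z0 z1.
  rewrite /l1norm -[2]/(1 + 1) -{1}x1 -z1 -big_split /=.
  apply: eq_bigr => k _; rewrite !mxE.
  have := disj z hz k; have := x0 k; have := z0 k => h1 h2 h3.
  have [xk0|xkn] := eqVneq (x k 0) 0.
    by rewrite xk0 sub0r normrN add0r ger0_norm.
  have zk0 : z k 0 = 0.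
    by apply/eqP; move/eqP: h3; rewrite mulf_eq0 (negbTE xkn).
  by rewrite zk0 subr0 addr0 ger0_norm.
have [z0 sz0 Bz0] := hu.
have hZ : Zset B u z0 by [].
exists u, x; split => //.
  move=> hx; have [k xk] : exists k, x k 0 != 0.
    apply/existsP; apply: contraT; rewrite negb_exists => /forallP h.
    case: sx => _; rewrite big1 => [/eqP|i _]; first by rewrite eq_sym oner_eq0.
    by have := h i; rewrite negbK => /eqP.
  have := l2 x hx; rewrite subrr /l1norm big1 => [/eqP|i _].
    by rewrite eq_sym pnatr_eq0.
  by rewrite mxE normr0.
have -> : distZ B x u = 2.
  apply/le_anti/andP; split.
    by apply: inf_le; [move=> _ [z' _ <-]; exact: l1norm_ge0 | exists z0 => //; exact: l2].
  by apply: lb_le_inf; [exists 2; exists z0 => //; exact: l2 | move=> _ [z' /l2 -> <-]].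
congr (_%:E); rewrite -opprB norm2N; congr (_ / _); rewrite expr2; lra.
Qed.

End P7.



Section P8.
Variable R : realType.
Variables (m n : nat) (B : 'M[R]_(m, n)).

Lemma norm2_0 : norm2 (0 : 'cV[R]_m) = 0.
Proof. by rewrite /norm2 big1 ?sqrtr0 // => k _; rewrite mxE expr0n. Qed.

Lemma le_sqrt_norm2 (c : 'cV[R]_m) s : 0 <= s -> norm2 c ^+ 2 <= s -> norm2 c <= Num.sqrt s.
Proof.
move=> s0 h; rewrite -[norm2 c]ger0_norm ?norm2_ge0 // -sqrtr_sqr ler_sqrt //.
Qed.

Lemma pair_lower i j : col i B != col j B ->
  exists2 r, rset B r & (((norm2 (col i B - col j B)) ^+ 2 / 4)%:E <= r)%E.
Proof.
move=> hij.
have hv : convA B (col j B) := convA_col B j.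
have sx : simplex (ev i) := @simplex_ev R n i.
have nZ : ~ Zset B (col j B) (ev i) by move=> [_]; rewrite mul_ev => e; rewrite e eqxx in hij.
exists ((norm2 (B *m ev i - col j B)) ^+ 2 / (distZ B (ev i) (col j B)) ^+ 2)%:E.
  by exists (col j B), (ev i); split.
rewrite lee_fin mul_ev.
have [z hz zmin] := exists_min (ev i) hv.
rewrite (distZ_eq hz zmin).
set D := l1norm (ev i - z).
have xz : ev i != z by apply/eqP => e; apply: nZ; rewrite e.
have Dp : 0 < D.
  rewrite lt_neqAle l1norm_ge0 andbT eq_sym; apply/eqP => /l1norm_eq0 /eqP.
  by rewrite subr_eq0 (negbTE xz).
have D2 : D <= 2 by apply: l1norm_simplex_le2 => //; case: hz.
set N := norm2 _ ^+ 2.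
have N0 : 0 <= N by exact: sqr_ge0.
rewrite ler_pdivlMr ?exprn_gt0 //.
apply: (@le_trans _ _ (N / 4 * 4)); last by rewrite divfK.
apply: ler_wpM2l; first by rewrite divr_ge0.
have : D * D <= 2 * 2 by apply: ler_pM => //; exact: ltW.
by rewrite expr2; mlra.
Qed.

Lemma L_eq i0 j0 : col i0 B != col j0 B -> ereal_sup (rset B) = ((diam B) ^+ 2 / 4)%:E.
Proof.
move=> hij.
have ub : (ereal_sup (rset B) <= ((diam B) ^+ 2 / 4)%:E)%E.
  by apply: ge_ereal_sup => r /rset_upper.
have [r0 hr0 lr0] := pair_lower hij.
have lb0 : (0 <= ereal_sup (rset B))%E.
  exact: le_trans (rset_ge0 hr0) (ereal_sup_ubound hr0).
have hpair : forall i j, (((norm2 (col i B - col j B)) ^+ 2 / 4)%:E <= ereal_sup (rset B))%E.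
  move=> i j; have [e|ne] := eqVneq (col i B) (col j B).
    by rewrite e subrr norm2_0 expr0n /= mul0r.
  have [r hr lr] := pair_lower ne.
  exact: le_trans lr (ereal_sup_ubound hr).
move: ub lb0 hpair; case: (ereal_sup (rset B)) => [s| |] //= ub lb0 hpair.
congr (_%:E); apply/le_anti/andP; split; first by rewrite -lee_fin.
rewrite lee_fin in lb0.
have hd : diam B <= Num.sqrt (4 * s).
  apply: ge_sup; first by exists (norm2 (col i0 B - col j0 B)); exists i0 => //; exists j0.
  move=> _ [i _ [j _ <-]]; apply: le_sqrt_norm2; first by mlra.
  have := hpair i j; rewrite lee_fin; mlra.
have d0 := diam_ge0 B i0.
have := ler_pM d0 d0 hd hd.
rewrite -expr2 -expr2 sqr_sqrtr; last by mlra.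
by move=> h; mlra.
Qed.

Lemma exists_face r : rset B r -> exists F, [/\ is_face (convA B) F, F !=set0 & F <> convA B].
Proof.
move=> [v [x [hv sx nZ _]]].
have [z hz zmin] := exists_min x hv.
have xz : x != z by apply/eqP => e; apply: nZ; rewrite e.
have [F [y [w [[h1 h2 h3 _ _] _]]]] := face_bound sx hz zmin xz.
by exists F.
Qed.

Lemma mu_eq i0 j0 : col i0 B != col j0 B -> ereal_inf (rset B) = ((facial_dist B) ^+ 2 / 4)%:E.
Proof.
move=> hij.
have lb : (((facial_dist B) ^+ 2 / 4)%:E <= ereal_inf (rset B))%E.
  by apply: le_ereal_inf_tmp => r /rset_lower.
have [r0 hr0 _] := pair_lower hij.
have ubr := ereal_inf_lbound hr0.
have [F0 hF0] := exists_face hr0.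
have hinst : forall F u w, is_face (convA B) F -> F u -> conv_cols_notin B F w ->
    (ereal_inf (rset B) <= ((norm2 (u - w)) ^+ 2 / 4)%:E)%E.
  move=> F u _ hF Fu [x [sx xF] <-].
  exact: ereal_inf_lbound (face_instance hF Fu sx xF).
have r0fin : exists q : R, r0 = q%:E by case: hr0 => v [x [_ _ _ ->]]; eexists.
case: r0fin => q0 q0E; rewrite q0E in ubr.
move: lb ubr hinst; case: (ereal_inf (rset B)) => [s| |] //= lb ubr hinst.
congr (_%:E); apply/le_anti/andP; split; last by rewrite -lee_fin.
have f0 := @facial_ge0 R m n B.
have s0 : 0 <= s by rewrite lee_fin in lb; apply: le_trans lb; rewrite divr_ge0 // sqr_ge0.
have hd : Num.sqrt (4 * s) <= facial_dist B.
  apply: lb_le_inf; first by case: hF0 => h1 h2 h3; exists (setdist F0 (conv_cols_notin B F0)), F0.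
  move=> _ [F [hF [u Fu] hne] <-].
  have [j nFj] := proper_face_col hF hne.
  apply: lb_le_inf.
    exists (norm2 (u - col j B)); exists u => //; exists (col j B) => //.
    exists (ev j); last exact: mul_ev.
    split; first exact: (@simplex_ev R n j).
    move=> k Fk; rewrite mxE; have [e|//] := eqVneq k j.
    by move: Fk; rewrite e.
  move=> _ [u' Fu' [w Gw <-]].
  have := hinst F u' w hF Fu' Gw; rewrite lee_fin => h.
  rewrite -[norm2 _]ger0_norm ?norm2_ge0 // -sqrtr_sqr ler_sqrt //; first by mlra.
  exact: sqr_ge0.
have := ler_pM (sqrtr_ge0 _) (sqrtr_ge0 _) hd hd.
rewrite -expr2 -expr2 sqr_sqrtr; last by mlra.
move=> h; mlra.
Qed.

End P8.


Section P9.
Variable R : realType.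
Variable m : nat.

Definition bl (a c : 'cV[R]_m) : R := (a^T *m c) 0 0.
Lemma blDl a a' c : bl (a + a') c = bl a c + bl a' c.
Proof. by rewrite /bl linearD /= mulmxDl mxE. Qed.
Lemma blZl k a c : bl (k *: a) c = k * bl a c.
Proof. by rewrite /bl linearZ /= -scalemxAl mxE. Qed.
Lemma blDr a c c' : bl a (c + c') = bl a c + bl a c'.
Proof. by rewrite /bl mulmxDr mxE. Qed.
Lemma blZr k a c : bl a (k *: c) = k * bl a c.
Proof. by rewrite /bl -scalemxAr mxE. Qed.
Lemma bl_norm2 a : bl a a = norm2 a ^+ 2.
Proof. by rewrite /bl norm2_sq mxE; apply: eq_bigr => i _; rewrite mxE expr2. Qed.

End P9.

Unset Implicit Arguments.

Theorem corollary1 (R : realType) (m n : nat)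
  (Q : 'M[R]_m) (b : 'cV[R]_m) (S : 'M[R]_m) (A : 'M[R]_(m, n)) :
  Q^T = Q ->
  (forall v : 'cV[R]_m, v != 0 -> 0 < (v^T *m Q *m v) 0 0) ->
  (* S = Q^{1/2}: the symmetric positive semidefinite square root of Q *)
  S^T = S ->
  (forall v : 'cV[R]_m, 0 <= (v^T *m S *m v) 0 0) ->
  S *m S = Q ->
  (exists i j : 'I_n, col i A != col j A) ->
  let f := fun u : 'cV[R]_m => 2^-1 * ((Q *m u)^T *m u) 0 0 + (b^T *m u) 0 0 in
  [/\ Lconst f A = ((diam (S *m A)) ^+ 2 / 4)%:E,
      muconst f A = ((facial_dist (S *m A)) ^+ 2 / 4)%:E &
      fine (Lconst f A) / fine (muconst f A)
        = (diam (S *m A)) ^+ 2 / (facial_dist (S *m A)) ^+ 2].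
Proof.
move=> QT Qpd ST _ SSQ [i0 [j0 hij]] f.
set B := S *m A.
have Sinj : forall w : 'cV[R]_m, S *m w = 0 -> w = 0.
  move=> w Sw; apply/eqP; apply: contraT => wn; have := Qpd w wn; rewrite -SSQ.
  have -> : w^T *m (S *m S) *m w = w^T *m S *m (S *m w) by rewrite !mulmxA.
  by rewrite Sw mulmx0 mxE ltxx.
have colB : forall i, col i B = S *m col i A.
  by move=> i; rewrite -!mul_ev /B mulmxA.
have hij' : col i0 B != col j0 B.
  apply: contraNN hij; rewrite !colB => /eqP h; apply/eqP.
  by apply/eqP; rewrite -subr_eq0; apply/eqP/Sinj; rewrite mulmxBr h subrr.
have Zeq : forall u, Zset A u = Zset B (S *m u).
  move=> u; apply/seteqP; split => z [sz Az]; split => //.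
    by rewrite /B -mulmxA Az.
  apply/eqP; rewrite -subr_eq0; apply/eqP/Sinj.
  by rewrite mulmxBr mulmxA -/B Az subrr.
have fE : forall w, f w = 2^-1 * bl (Q *m w) w + bl b w by [].
have breg : forall u x, bregman f A u x = 2^-1 * norm2 (B *m x - S *m u) ^+ 2.
  move=> u x; rewrite /bregman.
  have gen : forall (d : 'cV[R]_m) h, f (h *: d + u) - f u =
     h * (2^-1 * (bl (Q *m d) u + bl (Q *m u) d) + bl b d) + h ^+ 2 * (2^-1 * bl (Q *m d) d).
    move=> d h; rewrite !fE mulmxDr -scalemxAr !(blDl, blZl, blDr, blZr).
    ring.
  set d := A *m x - u.
  pose D := 2^-1 * (bl (Q *m d) u + bl (Q *m u) d) + bl b d.
  pose E := 2^-1 * bl (Q *m d) d.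
  have expand : forall h, f (h *: d + u) - f u = h * D + h ^+ 2 * E by move=> h; exact: gen.
  rewrite (derive_quad expand).
  have -> : A *m x = 1 *: d + u by rewrite scale1r /d subrK.
  rewrite expand /E expr1n mul1r mul1r addrAC subrr add0r.
  congr (_ * _); rewrite -bl_norm2 /bl -SSQ.
  have -> : B *m x - S *m u = S *m d by rewrite /d mulmxBr mulmxA.
  by rewrite -mulmxA trmx_mul ST trmx_mul ST mulmxA.
have ratioE : ratio_set f A = rset B.
  apply/seteqP; split => r.
    move=> [u [x [hu sx nZ ->]]]; exists (S *m u), x; split => //.
    - by case: hu => z sz <-; exists z => //; rewrite /B mulmxA.
    - by rewrite -Zeq.
    - by rewrite breg /distZ Zeq mulrA mulfV ?mul1r.
  move=> [v [x [hv sx nZ ->]]].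
  case: hv => z sz Bz.
  exists (A *m z), x; split => //.
  - by exists z.
  - by rewrite Zeq mulmxA -/B Bz.
  - by rewrite breg /distZ Zeq mulmxA -/B Bz mulrA mulfV ?mul1r.
have hL : Lconst f A = ((diam B) ^+ 2 / 4)%:E by rewrite /Lconst ratioE (L_eq hij').
have hmu : muconst f A = ((facial_dist B) ^+ 2 / 4)%:E by rewrite /muconst ratioE (mu_eq hij').
split => //.
rewrite hL hmu /= invf_div mulrA divfK //.
Qed.
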